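(* Let $QI^+(\mathbb{R})$ be the index $2$ subgroup of $QI(\mathbb{R})$ consisting of classes of quasi-isometries fixing the ends $+\infty$ and $-\infty$. Let $Q_+$ (resp. $Q_-$) be the subgroup of $QI(\mathbb{R})$ consisting of classes $[f]$ with $f$ a quasi-isometry that is the identity near $-\infty$ (resp. near $+\infty$). Then $Q_+$ and $Q_-$ are subgroups of $QI^+(\mathbb{R})$, and $QI^+(\mathbb{R})\cong Q_+\times Q_-$; more precisely, $Q_+\cap Q_-$ is trivial, elements of $Q_+$ commute with elements of $Q_-$, and $QI^+(\mathbb{R})=Q_+Q_-$, so $QI^+(\mathbb{R})$ is the internal direct product of $Q_+$ and $Q_-$.
   Context: A map $f:\mathbb{R}\to\mathbb{R}$ is a quasi-isometry if there is $K>1$ such that $\frac{1}{K}|x_1-x_2|-K\le |f(x_1)-f(x_2)|\le K|x_1-x_2|+K$ for all $x_1,x_2$, and every $y\in\mathbb{R}$ is within distance $K$ of some $f(x)$. Two quasi-isometries are equivalent if their difference is bounded; $QI(\mathbb{R})$ is the group of equivalence classes $[f]$ under $[f][g]=[f\circ g]$. A quasi-isometry $f$ fixes the ends if $f(t)\to+\infty$ as $t\to+\infty$ and $f(t)\to-\infty$ as $t\to-\infty$. ''$f$ is the identity near $-\infty$'' means there is $c\in\mathbb{R}$ with $f(t)=t$ for all $t\le c$ (similarly near $+\infty$: $f(t)=t$ for all $t\ge c$). *)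

(* Defs.v *)
From Stdlib Require Import Reals Lra.
Open Scope R_scope.

Definition is_QI (f : R -> R) : Prop :=
  exists K : R, 1 < K /\
    (forall x1 x2 : R,
        Rabs (x1 - x2) / K - K <= Rabs (f x1 - f x2) /\
        Rabs (f x1 - f x2) <= K * Rabs (x1 - x2) + K) /\
    (forall y : R, exists x : R, Rabs (y - f x) <= K).

(* Equivalence of quasi-isometries: bounded difference, i.e. [f] = [g] in QI(R). *)
Definition qi_equiv (f g : R -> R) : Prop :=
  exists C : R, forall x : R, Rabs (f x - g x) <= C.

Definition fixes_ends (f : R -> R) : Prop :=
  (forall M : R, exists T : R, forall t : R, T <= t -> M <= f t) /\
  (forall M : R, exists T : R, forall t : R, t <= T -> f t <= M).

Definition id_near_minf (f : R -> R) : Prop :=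
  exists c : R, forall t : R, t <= c -> f t = t.
Definition id_near_pinf (f : R -> R) : Prop :=
  exists c : R, forall t : R, c <= t -> f t = t.

(* Membership of the class [f] in QI^+(R), Q_+ and Q_- respectively:
   the class has a representative with the given property. *)
Definition in_QIplus (f : R -> R) : Prop :=
  is_QI f /\ exists g, is_QI g /\ fixes_ends g /\ qi_equiv f g.
Definition in_Qplus (f : R -> R) : Prop :=
  is_QI f /\ exists g, is_QI g /\ id_near_minf g /\ qi_equiv f g.
Definition in_Qminus (f : R -> R) : Prop :=
  is_QI f /\ exists g, is_QI g /\ id_near_pinf g /\ qi_equiv f g.

Definition qi_subgroup (P : (R -> R) -> Prop) : Prop :=
  P (fun x => x) /\
  (forall f g, P f -> P g -> P (fun x => f (g x))) /\
  (forall f, P f -> exists h, P h /\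
      qi_equiv (fun x => f (h x)) (fun x => x) /\
      qi_equiv (fun x => h (f x)) (fun x => x)).

(* Main.v *)
Require Import Defs.
From Stdlib Require Import Reals.
From Stdlib Require Import Lra Psatz ClassicalEpsilon.
Open Scope R_scope.

Definition bnd (A:R) (f:R->R) := forall x1 x2,
  Rabs (x1-x2) <= A*Rabs(f x1 - f x2) + A /\ Rabs(f x1 - f x2) <= A*Rabs(x1-x2)+A.
Definition QI' f := exists A, 1 <= A /\ bnd A f /\ forall y, exists x, Rabs(y - f x) <= A.

Lemma tri a b c : Rabs (a - c) <= Rabs (a - b) + Rabs (b - c).
Proof. replace (a - c) with ((a-b)+(b-c)) by ring. apply Rabs_triang. Qed.

Lemma isQI_to f : is_QI f -> QI' f.
Proof.
  intros [K [HK [Hb Hs]]]. exists (K*K). split; [nra|split].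
  - intros x1 x2. destruct (Hb x1 x2) as [H1 H2].
    set (r := Rabs (x1 - x2)) in *. set (d := Rabs (f x1 - f x2)) in *.
    assert (r0 : 0 <= r) by apply Rabs_pos. assert (d0 : 0 <= d) by apply Rabs_pos.
    split.
    + assert (H3 : r / K <= d + K) by lra.
      assert (H4 : K * (r/K) <= K * (d + K)) by (apply Rmult_le_compat_l; lra).
      replace (K * (r/K)) with r in H4 by (field; lra).
      assert (0 <= (K*K-K)*d) by (apply Rmult_le_pos; nra). nra.
    + assert (0 <= (K*K-K)*r) by (apply Rmult_le_pos; nra). nra.
  - intros y. destruct (Hs y) as [x Hx]. exists x. nra.
Qed.

Lemma isQI_from f : QI' f -> is_QI f.
Proof.
  intros [A [HA [Hb Hs]]]. exists (A+1). split; [lra|split].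
  - intros x1 x2. destruct (Hb x1 x2) as [H1 H2].
    set (r := Rabs (x1 - x2)) in *. set (d := Rabs (f x1 - f x2)) in *.
    assert (r0 : 0 <= r) by apply Rabs_pos. assert (d0 : 0 <= d) by apply Rabs_pos.
    split; [|nra].
    assert (H3 : r <= (d+1)*(A+1)) by nra.
    assert (H4 : r / (A+1) <= d + 1).
    { replace (d+1) with (((d+1)*(A+1)) / (A+1)) by (field; lra).
      unfold Rdiv. apply Rmult_le_compat_r; [|exact H3].
      left; apply Rinv_0_lt_compat; lra. }
    lra.
  - intros y. destruct (Hs y) as [x Hx]. exists x. lra.
Qed.

Lemma choice_fun (P : R -> R -> Prop) : (forall y, exists x, P y x) -> exists h, forall y, P y (h y).
Proof.
  intros H. exists (fun y => proj1_sig (constructive_indefinite_description _ (H y))).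
  intros y. exact (proj2_sig (constructive_indefinite_description _ (H y))).
Qed.

Lemma bnd_mono A A' f : A <= A' -> bnd A f -> bnd A' f.
Proof.
  intros HA H x1 x2. destruct (H x1 x2) as [H1 H2].
  pose proof (Rabs_pos (x1-x2)). pose proof (Rabs_pos (f x1 - f x2)).
  split; nra.
Qed.

Lemma eqv_refl f : qi_equiv f f.
Proof. exists 0. intros x. replace (f x - f x) with 0 by ring. rewrite Rabs_R0. lra. Qed.

Lemma eqv_sym f g : qi_equiv f g -> qi_equiv g f.
Proof. intros [C H]. exists C. intros x. rewrite Rabs_minus_sym. apply H. Qed.

Lemma eqv_trans f g h : qi_equiv f g -> qi_equiv g h -> qi_equiv f h.
Proof.
  intros [C1 H1] [C2 H2]. exists (C1+C2). intros x.
  pose proof (tri (f x) (g x) (h x)). specialize (H1 x). specialize (H2 x). lra.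
Qed.

Lemma eqv_compr f f' g : qi_equiv f f' -> qi_equiv (fun x => f (g x)) (fun x => f' (g x)).
Proof. intros [C H]. exists C. intros x. apply H. Qed.

Lemma eqv_compl A f g g' : bnd A f -> qi_equiv g g' ->
  qi_equiv (fun x => f (g x)) (fun x => f (g' x)).
Proof.
  intros Hf [C H]. exists (A*C + A). intros x. destruct (Hf (g x) (g' x)) as [_ H2].
  specialize (H x). assert (0 <= A).
  { destruct (Hf 0 0) as [H3 _]. replace (0-0) with 0 in H3 by ring.
    rewrite Rabs_R0 in H3. pose proof (Rabs_pos (f 0 - f 0)). nra. }
  nra.
Qed.

Lemma QI'_comp f g : QI' f -> QI' g -> QI' (fun x => f (g x)).
Proof.
  intros [A [HA [Hb Hs]]] [B [HB [Gb Gs]]].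
  exists (A*B + 2*A + B). split; [nra|split].
  - intros x y. destruct (Gb x y) as [G1 G2]. destruct (Hb (g x) (g y)) as [F1 F2].
    pose proof (Rabs_pos (x-y)). pose proof (Rabs_pos (g x - g y)).
    pose proof (Rabs_pos (f (g x) - f (g y))).
    split; nra.
  - intros z. destruct (Hs z) as [x1 Hx1]. destruct (Gs x1) as [x Hx].
    exists x. destruct (Hb x1 (g x)) as [_ F2].
    pose proof (tri z (f x1) (f (g x))). nra.
Qed.

Lemma QI_comp f g : is_QI f -> is_QI g -> is_QI (fun x => f (g x)).
Proof. intros. apply isQI_from, QI'_comp; apply isQI_to; auto. Qed.

Lemma qinv_QI A B f h : 1 <= A -> bnd A f -> (forall y, Rabs (y - f (h y)) <= B) -> QI' h.
Proof.
  intros HA Hb Hh. assert (B0 : 0 <= B) by (pose proof (Rabs_pos (0 - f (h 0))); specialize (Hh 0); lra).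
  exists (A + 2*A*B + 2*B). split; [nra|split].
  - intros a b. destruct (Hb (h a) (h b)) as [F1 F2].
    pose proof (Hh a). pose proof (Hh b).
    assert (T1 : Rabs (f (h a) - f (h b)) <= Rabs (a - b) + 2*B).
    { pose proof (tri (f (h a)) a (f (h b))). pose proof (tri a b (f (h b))).
      rewrite (Rabs_minus_sym (f (h a)) a) in *. lra. }
    assert (T2 : Rabs (a - b) <= Rabs (f (h a) - f (h b)) + 2*B).
    { pose proof (tri a (f (h a)) b). pose proof (tri (f (h a)) (f (h b)) b).
      rewrite (Rabs_minus_sym (f (h b)) b) in *. lra. }
    pose proof (Rabs_pos (a-b)). pose proof (Rabs_pos (h a - h b)).
    pose proof (Rabs_pos (f (h a) - f (h b))).
    assert (M1 : A * Rabs (f (h a) - f (h b)) <= A * (Rabs (a - b) + 2*B)) by (apply Rmult_le_compat_l; lra).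
    assert (M2 : 0 <= (2*A*B + 2*B) * Rabs (a-b)) by (apply Rmult_le_pos; nra).
    assert (M3 : 0 <= (2*A*B + 2*B) * Rabs (h a - h b)) by (apply Rmult_le_pos; nra).
    split; nra.
  - intros x. exists (f x). destruct (Hb x (h (f x))) as [F1 _].
    pose proof (Hh (f x)) as H.
    assert (A * Rabs (f x - f (h (f x))) <= A * B) by (apply Rmult_le_compat_l; lra).
    assert (0 <= A*B) by nra. lra.
Qed.

Definition QN (N : (R->R)->Prop) f := is_QI f /\ exists g, is_QI g /\ N g /\ qi_equiv f g.

Lemma QI_id : is_QI (fun x => x).
Proof.
  apply isQI_from. exists 1. split; [lra|split].
  - intros x1 x2. pose proof (Rabs_pos (x1-x2)). lra.
  - intros y. exists y. replace (y-y) with 0 by ring. rewrite Rabs_R0. lra.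
Qed.

Lemma QI_bnd f : is_QI f -> exists A, 1 <= A /\ bnd A f.
Proof. intros H. destruct (isQI_to f H) as [A [HA [Hb _]]]. eauto. Qed.

Lemma subgroup_gen N :
  N (fun x => x) ->
  (forall f g, N f -> N g -> N (fun x => f (g x))) ->
  (forall f A, 1 <= A -> bnd A f -> (forall y, exists x, Rabs (y - f x) <= A) -> N f ->
     exists h, N h /\ forall y, Rabs (y - f (h y)) <= A) ->
  qi_subgroup (QN N).
Proof.
  intros Nid Ncomp Ninv. split; [|split].
  - split; [apply QI_id|]. exists (fun x => x). split; [apply QI_id|split; auto]. apply eqv_refl.
  - intros f g [Qf [f' [Qf' [Nf' Ef]]]] [Qg [g' [Qg' [Ng' Eg]]]].
    split; [apply QI_comp; auto|].
    exists (fun x => f' (g' x)). split; [apply QI_comp; auto|split; auto].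
    destruct (QI_bnd f Qf) as [A [_ HA]].
    eapply eqv_trans; [eapply eqv_compl; eauto|]. apply eqv_compr; auto.
  - intros f [Qf [f' [Qf' [Nf' Ef]]]].
    destruct (isQI_to f' Qf') as [A [HA [Hb Hs]]].
    destruct (Ninv f' A HA Hb Hs Nf') as [h [Nh Hh]].
    assert (Qh : is_QI h) by (apply isQI_from; eapply qinv_QI; eauto).
    exists h. split; [split; [auto| exists h; split; [auto|split; [auto|apply eqv_refl]]]|split].
    + eapply eqv_trans; [apply eqv_compr; eauto|].
      exists A. intros y. rewrite Rabs_minus_sym. apply Hh.
    + destruct (QI_bnd h Qh) as [A' [_ HA']].
      eapply eqv_trans; [eapply eqv_compl; eauto|].
      exists (A*A + A). intros x. destruct (Hb (h (f' x)) x) as [F1 _].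
      pose proof (Hh (f' x)) as H. rewrite Rabs_minus_sym in H.
      assert (A * Rabs (f' (h (f' x)) - f' x) <= A * A) by (apply Rmult_le_compat_l; lra).
      lra.
Qed.

Lemma Qplus_sub : qi_subgroup in_Qplus.
Proof.
  apply (subgroup_gen id_near_minf).
  - exists 0. auto.
  - intros f g [c1 H1] [c2 H2]. exists (Rmin c1 c2). intros t Ht.
    rewrite H2 by (pose proof (Rmin_r c1 c2); lra). apply H1. pose proof (Rmin_l c1 c2); lra.
  - intros f A HA Hb Hs [c Hc]. destruct (choice_fun _ Hs) as [h0 Hh0].
    exists (fun y => if Rle_dec y c then y else h0 y). split.
    + exists c. intros t Ht. destruct (Rle_dec t c); [auto|lra].
    + intros y. destruct (Rle_dec y c); [|apply Hh0].
      rewrite Hc by auto. replace (y-y) with 0 by ring. rewrite Rabs_R0. lra.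
Qed.

Lemma Qminus_sub : qi_subgroup in_Qminus.
Proof.
  apply (subgroup_gen id_near_pinf).
  - exists 0. auto.
  - intros f g [c1 H1] [c2 H2]. exists (Rmax c1 c2). intros t Ht.
    rewrite H2 by (pose proof (Rmax_r c1 c2); lra). apply H1. pose proof (Rmax_l c1 c2); lra.
  - intros f A HA Hb Hs [c Hc]. destruct (choice_fun _ Hs) as [h0 Hh0].
    exists (fun y => if Rle_dec c y then y else h0 y). split.
    + exists c. intros t Ht. destruct (Rle_dec c t); [auto|lra].
    + intros y. destruct (Rle_dec c y); [|apply Hh0].
      rewrite Hc by auto. replace (y-y) with 0 by ring. rewrite Rabs_R0. lra.
Qed.

Lemma fe_minf g : is_QI g -> id_near_minf g -> fixes_ends g.
Proof.
  intros Q [c Hc]. destruct (QI_bnd g Q) as [A [HA Hb]]. split.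
  - intros M. exists (c + A*(Rabs M + Rabs c) + A + 1). intros t Ht.
    assert (0 <= A*(Rabs M + Rabs c)) by (apply Rmult_le_pos; [lra|pose proof (Rabs_pos M); pose proof (Rabs_pos c); lra]).
    destruct (Rle_dec (g t) c) as [Hle|Hgt].
    + destruct (Hb t (g t)) as [F1 _]. rewrite (Hc (g t) Hle) in F1.
      replace (g t - g t) with 0 in F1 by ring. rewrite Rabs_R0 in F1.
      pose proof (Rle_abs (t - g t)). lra.
    + destruct (Rle_dec M (g t)) as [|HM]; [auto|exfalso].
      destruct (Hb t c) as [F1 _]. rewrite (Hc c (Rle_refl c)) in F1.
      assert (Rabs (g t - c) <= Rabs M + Rabs c).
      { rewrite Rabs_right by lra. pose proof (Rle_abs M). pose proof (Rle_abs (-c)).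
        rewrite Rabs_Ropp in *. lra. }
      assert (A * Rabs (g t - c) <= A * (Rabs M + Rabs c)) by (apply Rmult_le_compat_l; lra).
      pose proof (Rle_abs (t - c)). lra.
  - intros M. exists (Rmin c M). intros t Ht. rewrite Hc.
    + pose proof (Rmin_r c M); lra.
    + pose proof (Rmin_l c M); lra.
Qed.

Lemma fe_pinf g : is_QI g -> id_near_pinf g -> fixes_ends g.
Proof.
  intros Q [c Hc]. destruct (QI_bnd g Q) as [A [HA Hb]]. split.
  - intros M. exists (Rmax c M). intros t Ht. rewrite Hc.
    + pose proof (Rmax_r c M); lra.
    + pose proof (Rmax_l c M); lra.
  - intros M. exists (c - A*(Rabs M + Rabs c) - A - 1). intros t Ht.
    assert (0 <= A*(Rabs M + Rabs c)) by (apply Rmult_le_pos; [lra|pose proof (Rabs_pos M); pose proof (Rabs_pos c); lra]).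
    destruct (Rle_dec c (g t)) as [Hle|Hgt].
    + destruct (Hb t (g t)) as [F1 _]. rewrite (Hc (g t) Hle) in F1.
      replace (g t - g t) with 0 in F1 by ring. rewrite Rabs_R0 in F1.
      pose proof (Rle_abs (-(t - g t))). rewrite Rabs_Ropp in *. lra.
    + destruct (Rle_dec (g t) M) as [|HM]; [auto|exfalso].
      destruct (Hb t c) as [F1 _]. rewrite (Hc c (Rle_refl c)) in F1.
      assert (Rabs (g t - c) <= Rabs M + Rabs c).
      { rewrite Rabs_left by lra. pose proof (Rle_abs (-M)). pose proof (Rle_abs c).
        rewrite Rabs_Ropp in *. lra. }
      assert (A * Rabs (g t - c) <= A * (Rabs M + Rabs c)) by (apply Rmult_le_compat_l; lra).
      pose proof (Rle_abs (-(t - c))). rewrite Rabs_Ropp in *. lra.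
Qed.

Lemma fe_comp f g : fixes_ends f -> fixes_ends g -> fixes_ends (fun x => f (g x)).
Proof.
  intros [f1 f2] [g1 g2]. split.
  - intros M. destruct (f1 M) as [T1 H1]. destruct (g1 T1) as [T2 H2].
    exists T2. intros t Ht. apply H1, H2, Ht.
  - intros M. destruct (f2 M) as [T1 H1]. destruct (g2 T1) as [T2 H2].
    exists T2. intros t Ht. apply H1, H2, Ht.
Qed.

Lemma Qplus_QIp f : in_Qplus f -> in_QIplus f.
Proof. intros [Q [g [Qg [Ng E]]]]. split; auto. exists g. split; auto. split; auto. apply fe_minf; auto. Qed.
Lemma Qminus_QIp f : in_Qminus f -> in_QIplus f.
Proof. intros [Q [g [Qg [Ng E]]]]. split; auto. exists g. split; auto. split; auto. apply fe_pinf; auto. Qed.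

Lemma agree_outside A F G a b : bnd A F -> bnd A G ->
  (forall x, x <= a \/ b <= x -> F x = G x) -> qi_equiv F G.
Proof.
  intros HF HG E. exists (2*(A*Rabs (b-a) + A) + Rabs (F a - G a)). intros x.
  assert (A0 : 0 <= A).
  { destruct (HF 0 0) as [H3 _]. replace (0-0) with 0 in H3 by ring.
    rewrite Rabs_R0 in H3. pose proof (Rabs_pos (F 0 - F 0)). nra. }
  destruct (Rle_dec x a) as [H|H]; [rewrite E by auto; replace (G x - G x) with 0 by ring; rewrite Rabs_R0;
    pose proof (Rabs_pos (b-a)); pose proof (Rabs_pos (F a - G a)); nra|].
  destruct (Rle_dec b x) as [H'|H']; [rewrite E by auto; replace (G x - G x) with 0 by ring; rewrite Rabs_R0;
    pose proof (Rabs_pos (b-a)); pose proof (Rabs_pos (F a - G a)); nra|].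
  destruct (HF x a) as [_ F2]. destruct (HG a x) as [_ G2].
  assert (Rabs (x - a) <= Rabs (b - a)) by (rewrite !Rabs_right by lra; lra).
  assert (Rabs (a - x) <= Rabs (b - a)) by (rewrite Rabs_minus_sym; lra).
  assert (A * Rabs (x - a) <= A * Rabs (b - a)) by (apply Rmult_le_compat_l; lra).
  assert (A * Rabs (a - x) <= A * Rabs (b - a)) by (apply Rmult_le_compat_l; lra).
  pose proof (tri (F x) (F a) (G x)). pose proof (tri (F a) (G a) (G x)). lra.
Qed.

Lemma eqv_nonneg (f g : R -> R) C : (forall x, Rabs (f x - g x) <= C) -> 0 <= C.
Proof. intros H. pose proof (H 0). pose proof (Rabs_pos (f 0 - g 0)). lra. Qed.

Lemma inter f : in_Qplus f -> in_Qminus f -> qi_equiv f (fun x => x).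
Proof.
  intros [Q [g1 [_ [[c1 N1] [C1 E1]]]]] [_ [g2 [_ [[c2 N2] [C2 E2]]]]].
  destruct (QI_bnd f Q) as [A [HA Hb]].
  pose proof (eqv_nonneg _ _ _ E1). pose proof (eqv_nonneg _ _ _ E2).
  exists (C1 + C2 + (A+1)*Rabs (c2-c1) + A + Rabs (f c1 - c1)). intros x.
  pose proof (Rabs_pos (c2-c1)). pose proof (Rabs_pos (f c1 - c1)).
  assert (0 <= (A+1)*Rabs (c2-c1)) by (apply Rmult_le_pos; lra).
  destruct (Rle_dec x c1) as [Hx|Hx].
  { specialize (E1 x). rewrite N1 in E1 by auto. lra. }
  destruct (Rle_dec c2 x) as [Hx'|Hx'].
  { specialize (E2 x). rewrite N2 in E2 by auto. lra. }
  destruct (Hb x c1) as [_ F2].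
  assert (Rabs (x - c1) <= Rabs (c2 - c1)) by (rewrite !Rabs_right by lra; lra).
  assert (A * Rabs (x - c1) <= A * Rabs (c2 - c1)) by (apply Rmult_le_compat_l; lra).
  pose proof (tri (f x) (f c1) x). pose proof (tri (f c1) c1 x).
  rewrite (Rabs_minus_sym c1 x) in *. lra.
Qed.

Lemma commute f g : in_Qplus f -> in_Qminus g ->
  qi_equiv (fun x => f (g x)) (fun x => g (f x)).
Proof.
  intros [Qf [f' [Qf' [[c1 N1] Ef]]]] [Qg [g' [Qg' [[c2 N2] Eg]]]].
  destruct (QI_bnd f Qf) as [Af [_ Hf]]. destruct (QI_bnd g Qg) as [Ag [_ Hg]].
  destruct (QI_bnd _ (QI_comp _ _ Qf' Qg')) as [A1 [HA1 H1]].
  destruct (QI_bnd _ (QI_comp _ _ Qg' Qf')) as [A2 [HA2 H2]].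
  destruct (fe_minf f' Qf' (ex_intro _ c1 N1)) as [Pf _].
  destruct (fe_pinf g' Qg' (ex_intro _ c2 N2)) as [_ Pg].
  destruct (Pf c2) as [T1 HT1]. destruct (Pg c1) as [T2 HT2].
  apply eqv_trans with (fun x => f (g' x)); [exact (eqv_compl _ _ _ _ Hf Eg)|].
  apply eqv_trans with (fun x => f' (g' x)); [exact (eqv_compr _ _ _ Ef)|].
  apply eqv_trans with (fun x => g (f' x)); [|apply eqv_sym; exact (eqv_compl _ _ _ _ Hg Ef)].
  apply eqv_trans with (fun x => g' (f' x)); [|apply eqv_sym; exact (eqv_compr _ _ _ Eg)].
  apply (agree_outside (A1+A2) _ _ (Rmin T2 c1) (Rmax T1 c2)).
  - eapply bnd_mono; [|exact H1]. lra.
  - eapply bnd_mono; [|exact H2]. lra.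
  - intros x [Hx|Hx].
    + pose proof (Rmin_l T2 c1). pose proof (Rmin_r T2 c1).
      rewrite (N1 x) by lra. apply N1. apply HT2. lra.
    + pose proof (Rmax_l T1 c2). pose proof (Rmax_r T1 c2).
      rewrite (N2 x) by lra. symmetry. apply N2. apply HT1. lra.
Qed.

Lemma prod_in g h : in_Qplus g -> in_Qminus h -> in_QIplus (fun x => g (h x)).
Proof.
  intros [Qg [g' [Qg' [Ng Eg]]]] [Qh [h' [Qh' [Nh Eh]]]].
  split; [apply QI_comp; auto|].
  exists (fun x => g' (h' x)). split; [apply QI_comp; auto|split].
  - apply fe_comp; [apply fe_minf|apply fe_pinf]; auto.
  - destruct (QI_bnd g Qg) as [A [_ HA]].
    eapply eqv_trans; [eapply eqv_compl; eauto|]. apply eqv_compr; auto.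
Qed.

Lemma disc_ivt (f : R -> R) p y : f (p + INR 0) <= y ->
  forall n, y < f (p + INR n) -> exists k, f (p + INR k) <= y /\ y < f (p + INR (S k)).
Proof.
  intros H0 n. induction n as [|n IH]; intros Hn; [lra|].
  destruct (Rle_dec (f (p + INR n)) y) as [Hl|Hl].
  - exists n. auto.
  - apply IH. lra.
Qed.

Lemma mono A f : 1 <= A -> bnd A f -> (forall M, exists T, forall t, T <= t -> M <= f t) ->
  forall x p, x <= p -> f x <= f p + (A*(2*A*A + A) + A).
Proof.
  intros HA Hb Hf x p Hxp.
  assert (0 <= A*(2*A*A + A)) by nra.
  destruct (Rle_dec (f x) (f p)) as [Hle|Hgt]; [lra|].
  destruct (Hf (f x + 1)) as [T HT]. destruct (INR_unbounded (T - p)) as [n Hn].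
  assert (Hn' : f x < f (p + INR n)) by (pose proof (HT (p + INR n)); lra).
  assert (H0 : f (p + INR 0) <= f x) by (simpl; replace (p+0) with p by ring; lra).
  destruct (disc_ivt f p (f x) H0 n Hn') as [k [K1 K2]].
  rewrite S_INR in K2. pose proof (pos_INR k).
  destruct (Hb (p + INR k + 1) (p + INR k)) as [_ S1].
  replace (p + INR k + 1 - (p + INR k)) with 1 in S1 by ring. rewrite Rabs_R1 in S1.
  pose proof (Rle_abs (f (p + (INR k + 1)) - f (p + INR k))).
  replace (p + INR k + 1) with (p + (INR k + 1)) in S1 by ring.
  destruct (Hb (p + INR k) x) as [L1 _].
  assert (Rabs (f (p + INR k) - f x) <= 2*A) by (rewrite Rabs_left1 by lra; lra).
  assert (A * Rabs (f (p + INR k) - f x) <= A * (2*A)) by (apply Rmult_le_compat_l; lra).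
  assert (p - x <= 2*A*A + A) by (rewrite Rabs_right in L1 by lra; lra).
  destruct (Hb x p) as [_ U].
  assert (A * Rabs (x - p) <= A * (2*A*A + A)) by (apply Rmult_le_compat_l; [lra| rewrite Rabs_left1 by lra; lra]).
  pose proof (Rle_abs (f x - f p)). lra.
Qed.

Definition glue (F G : R -> R) := fun x => if Rle_dec x 0 then F x else G x.

Lemma cross A B F G x y : 1 <= A -> 0 <= B -> bnd A F -> bnd A G -> F 0 = 0 -> G 0 = 0 ->
  (forall x, x <= 0 -> F x <= B) -> (forall y, 0 <= y -> -B <= G y) ->
  x <= 0 -> 0 < y ->
  Rabs (x - y) <= (2*A + 4*A*B + 1) * Rabs (F x - G y) + (2*A + 4*A*B + 1) /\
  Rabs (F x - G y) <= (2*A + 4*A*B + 1) * Rabs (x - y) + (2*A + 4*A*B + 1).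
Proof.
  intros HA HB HF HG F0 G0 FB GB Hx Hy.
  destruct (HF x 0) as [F1 F2]. destruct (HG y 0) as [G1 G2].
  rewrite F0, Rminus_0_r, Rminus_0_r in F1, F2. rewrite G0, Rminus_0_r, Rminus_0_r in G1, G2.
  pose proof (FB x Hx). pose proof (GB y (Rlt_le _ _ Hy)).
  assert (Exy : Rabs (x - y) = Rabs x + Rabs y) by (rewrite Rabs_left, (Rabs_left1 x), (Rabs_right y) by lra; ring).
  assert (Uu : Rabs (F x) <= - F x + 2*B) by (unfold Rabs; destruct (Rcase_abs (F x)); lra).
  assert (Vv : Rabs (G y) <= G y + 2*B) by (unfold Rabs; destruct (Rcase_abs (G y)); lra).
  pose proof (Rle_abs (- (F x - G y))). rewrite Rabs_Ropp in H1.
  pose proof (Rabs_triang (F x) (- G y)) as H2. rewrite Rabs_Ropp in H2.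
  replace (F x + - G y) with (F x - G y) in H2 by ring.
  assert (M1 : A * (Rabs (F x) + Rabs (G y)) <= A * (Rabs (F x - G y) + 4*B)) by (apply Rmult_le_compat_l; lra).
  pose proof (Rabs_pos (x - y)). pose proof (Rabs_pos (F x - G y)).
  assert (M2 : 0 <= (A + 4*A*B + 1) * Rabs (x - y)) by (apply Rmult_le_pos; nra).
  assert (M3 : 0 <= (A + 4*A*B + 1) * Rabs (F x - G y)) by (apply Rmult_le_pos; nra).
  assert (0 <= A*B) by nra.
  rewrite Exy in *. split; lra.
Qed.

Lemma glue_bnd A B F G : 1 <= A -> 0 <= B -> bnd A F -> bnd A G -> F 0 = 0 -> G 0 = 0 ->
  (forall x, x <= 0 -> F x <= B) -> (forall y, 0 <= y -> -B <= G y) ->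
  bnd (2*A + 4*A*B + 1) (glue F G).
Proof.
  intros HA HB HF HG F0 G0 FB GB x1 x2. unfold glue.
  assert (A <= 2*A + 4*A*B + 1) by nra.
  destruct (Rle_dec x1 0) as [h1|h1]; destruct (Rle_dec x2 0) as [h2|h2].
  - exact (bnd_mono _ _ _ H HF x1 x2).
  - apply cross; auto; lra.
  - rewrite (Rabs_minus_sym x1), (Rabs_minus_sym (G x1)). apply cross; auto; lra.
  - exact (bnd_mono _ _ _ H HG x1 x2).
Qed.

Lemma bnd_id A : 1 <= A -> bnd A (fun x => x).
Proof. intros HA x1 x2. pose proof (Rabs_pos (x1-x2)). split; nra. Qed.

Lemma decomp f : in_QIplus f ->
  exists g h, in_Qplus g /\ in_Qminus h /\ qi_equiv f (fun x => g (h x)).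
Proof.
  intros [Qf [f0 [Q0 [[P0 _] E]]]].
  destruct (isQI_to f0 Q0) as [A [HA [Hb Hs]]].
  set (f1 := fun x => f0 x - f0 0).
  assert (B1 : bnd A f1).
  { intros x1 x2. unfold f1. replace (f0 x1 - f0 0 - (f0 x2 - f0 0)) with (f0 x1 - f0 x2) by ring. apply Hb. }
  assert (P1 : forall M, exists T, forall t, T <= t -> M <= f1 t).
  { intros M. destruct (P0 (M + f0 0)) as [T HT]. exists T. intros t Ht. unfold f1. pose proof (HT t Ht). lra. }
  assert (F10 : f1 0 = 0) by (unfold f1; ring).
  pose proof (mono A f1 HA B1 P1) as Mo.
  assert (HB : 0 <= A*(2*A*A + A) + A) by nra.
  set (B := A*(2*A*A + A) + A) in *.
  assert (Fle : forall x, x <= 0 -> f1 x <= B) by (intros x Hx; pose proof (Mo x 0 Hx); lra).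
  assert (Fge : forall y, 0 <= y -> -B <= f1 y) by (intros y Hy; pose proof (Mo 0 y Hy); lra).
  assert (AB : A + B <= 2*A + 4*A*B + 1) by nra.
  set (h := glue f1 (fun x => x)). set (g := glue (fun x => x) f1).
  assert (Qh : is_QI h).
  { apply isQI_from. exists (2*A + 4*A*B + 1). split; [nra|split].
    - apply glue_bnd; auto. apply bnd_id; auto. intros y Hy; lra.
    - intros z. destruct (Rle_dec z 0) as [Hz|Hz].
      + destruct (Hs (z + f0 0)) as [x Hx].
        replace (z + f0 0 - f0 x) with (z - f1 x) in Hx by (unfold f1; ring).
        destruct (Rle_dec x 0) as [Hx0|Hx0].
        * exists x. unfold h, glue. destruct (Rle_dec x 0); [lra|contradiction].
        * exists 0. unfold h, glue. destruct (Rle_dec 0 0) as [_|n]; [|lra]. rewrite F10.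
          pose proof (Fge x (Rlt_le _ _ (Rnot_le_lt _ _ Hx0))). pose proof (Rle_abs (-(z - f1 x))).
          rewrite Rabs_Ropp in H0. rewrite Rminus_0_r, Rabs_left1 by lra. lra.
      + exists z. unfold h, glue. destruct (Rle_dec z 0); [contradiction|].
        replace (z - z) with 0 by ring. rewrite Rabs_R0. nra. }
  assert (Qg : is_QI g).
  { apply isQI_from. exists (2*A + 4*A*B + 1). split; [nra|split].
    - apply glue_bnd; auto. apply bnd_id; auto. intros y Hy; lra.
    - intros z. destruct (Rle_dec z 0) as [Hz|Hz].
      + exists z. unfold g, glue. destruct (Rle_dec z 0); [|contradiction].
        replace (z - z) with 0 by ring. rewrite Rabs_R0. nra.
      + destruct (Hs (z + f0 0)) as [x Hx].
        replace (z + f0 0 - f0 x) with (z - f1 x) in Hx by (unfold f1; ring).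
        destruct (Rle_dec x 0) as [Hx0|Hx0].
        * exists 0. unfold g, glue. destruct (Rle_dec 0 0) as [_|n]; [|lra].
          pose proof (Fle x Hx0). pose proof (Rle_abs (z - f1 x)).
          rewrite Rminus_0_r, Rabs_right by lra. lra.
        * exists x. unfold g, glue. destruct (Rle_dec x 0); [contradiction|lra]. }
  exists g, h. split; [|split].
  - split; auto. exists g. split; auto. split; [|apply eqv_refl].
    exists 0. intros t Ht. unfold g, glue. destruct (Rle_dec t 0); [auto|contradiction].
  - split; auto. exists h. split; auto. split; [|apply eqv_refl].
    exists 1. intros t Ht. unfold h, glue. destruct (Rle_dec t 0); [lra|auto].
  - apply eqv_trans with f0; auto.
    apply eqv_trans with f1.
    { exists (Rabs (f0 0)). intros x. unfold f1. replace (f0 x - (f0 x - f0 0)) with (f0 0) by ring. lra. }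
    exists (A*B + A + B). intros x. unfold g, h, glue.
    destruct (Rle_dec x 0) as [Hx|Hx].
    + destruct (Rle_dec (f1 x) 0) as [Hu|Hu].
      * replace (f1 x - f1 x) with 0 by ring. rewrite Rabs_R0. nra.
      * pose proof (Fle x Hx). destruct (B1 (f1 x) 0) as [_ U].
        rewrite F10, !Rminus_0_r in U. rewrite (Rabs_right (f1 x)) in U by lra.
        assert (A * f1 x <= A * B) by (apply Rmult_le_compat_l; lra).
        pose proof (Rabs_triang (f1 (f1 x)) (- f1 x)) as H2. rewrite Rabs_Ropp, (Rabs_right (f1 x)) in H2 by lra.
        replace (f1 (f1 x) + - f1 x) with (f1 (f1 x) - f1 x) in H2 by ring. rewrite Rabs_minus_sym. lra.
    + destruct (Rle_dec x 0); [contradiction|].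
      replace (f1 x - f1 x) with 0 by ring. rewrite Rabs_R0. nra.
Qed.

Theorem mainTheorem2 :
  (* Q_+ and Q_- are subgroups of QI(R) contained in QI^+(R) *)
  qi_subgroup in_Qplus /\ qi_subgroup in_Qminus /\
  (forall f, in_Qplus f -> in_QIplus f) /\
  (forall f, in_Qminus f -> in_QIplus f) /\
  (* Q_+ ∩ Q_- is trivial *)
  (forall f, in_Qplus f -> in_Qminus f -> qi_equiv f (fun x => x)) /\
  (* elements of Q_+ commute with elements of Q_- *)
  (forall f g, in_Qplus f -> in_Qminus g ->
     qi_equiv (fun x => f (g x)) (fun x => g (f x))) /\
  (* QI^+(R) = Q_+ Q_- *)
  (forall g h, in_Qplus g -> in_Qminus h -> in_QIplus (fun x => g (h x))) /\
  (forall f, in_QIplus f ->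
     exists g h, in_Qplus g /\ in_Qminus h /\ qi_equiv f (fun x => g (h x))).
Proof.
  split; [exact Qplus_sub|]. split; [exact Qminus_sub|].
  split; [exact Qplus_QIp|]. split; [exact Qminus_QIp|].
  split; [exact inter|]. split; [exact commute|].
  split; [exact prod_in|]. exact decomp.
Qed.
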